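(* For every signed permutation $\pi\in\mathfrak{B}_n$, \[\sum_{k\ge0}\Omega'_B(\pi;k)\,t^k=\frac{(1+t)^n}{(1-t)^{n+1}}\left(\frac{2t}{1+t}\right)^{\varsigma(\pi)}\left(\frac{4t}{(1+t)^2}\right)^{\operatorname{pe}_B(\pi)}=\left(\frac12\right)^{\varsigma(\pi)}\frac{(1+t)^{n+\varsigma(\pi)}}{(1-t)^{n+1}}\left(\frac{4t}{(1+t)^2}\right)^{\operatorname{pe}_B(\pi)+\varsigma(\pi)}.\]
   Context: $\mathfrak{B}_n$ is the group of signed permutations (bijections $\pi$ of $\{-n,\dots,n\}$ with $\pi(-i)=-\pi(i)$), written as words $(\pi(1),\dots,\pi(n))$, with $\pi(0)=0$. A peak of $\pi$ is a position $i\in\{1,\dots,n-1\}$ with $\pi(i-1)<\pi(i)>\pi(i+1)$, and $\operatorname{pe}_B(\pi)$ is the number of peaks. $\varsigma(\pi)=0$ if $\pi(1)>0$ and $\varsigma(\pi)=1$ if $\pi(1)<0$. For an integer $k\ge0$ let $Z_k$ be the totally ordered set $0<\bar1<1<\bar2<2<\dots<\bar k<k$, with $0$ and unbarred $j$ ''plus-type'' and barred $\bar j$ ''minus-type''. $\Omega'_B(\pi;k)$ is the number of sequences $(a_1,\dots,a_n)\in Z_k^n$ such that, with $a_0=0$, $a_0\le a_1\le\dots\le a_n$ and for every $s\in\{0,\dots,n-1\}$: if $\pi(s)<\pi(s+1)$ then $a_s<a_{s+1}$ or ($a_s=a_{s+1}$ is plus-type); if $\pi(s)>\pi(s+1)$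 then $a_s<a_{s+1}$ or ($a_s=a_{s+1}$ is minus-type). *)

(* Defs.v *)
From HB Require Import structures.
From mathcomp Require Import all_boot all_order all_algebra.
From mathcomp Require Import all_classical all_reals all_analysis.

Set Implicit Arguments.
Unset Strict Implicit.
Unset Printing Implicit Defensive.

Import Order.TTheory GRing.Theory Num.Theory.

Definition is_signed_perm (n : nat) (w : n.-tuple int) : bool :=
  perm_eq (map absz w) (iota 1 n).

Definition piB (n : nat) (w : n.-tuple int) (i : nat) : int :=
  if i is i'.+1 then nth 0%R w i' else 0%R.

Definition varsigmaB (n : nat) (w : n.-tuple int) : nat :=
  nat_of_bool (piB w 1 < 0)%R.

Definition peB (n : nat) (w : n.-tuple int) : nat :=
  count (fun i => (piB w i.-1 < piB w i)%R && (piB w i.+1 < piB w i)%R)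
        (iota 1 n.-1).

(* The totally ordered set Z_k = {0 < -1 < 1 < -2 < 2 < ... < -k < k} is
   encoded order-preservingly by 'I_(2k+1):  0 |-> 0, \bar j |-> 2j-1,
   j |-> 2j.  Plus-type elements (0 and unbarred j) are the even codes,
   minus-type elements (barred \bar j) are the odd codes. *)
Definition Zk (k : nat) := 'I_(2 * k).+1.
Definition plus_type (z : nat) : bool := ~~ odd z.
Definition minus_type (z : nat) : bool := odd z.

Definition aB (n k : nat) (a : n.-tuple (Zk k)) (s : nat) : nat :=
  if s is s'.+1 then nth 0%N (map val a) s' else 0%N.

Definition compatible (n k : nat) (w : n.-tuple int) (a : n.-tuple (Zk k)) : bool :=
  [forall s : 'I_n,
     [&& aB a s <= aB a s.+1,
         (piB w s < piB w s.+1)%R ==>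
            (aB a s < aB a s.+1) || ((aB a s == aB a s.+1) && plus_type (aB a s)) &
         (piB w s.+1 < piB w s)%R ==>
            (aB a s < aB a s.+1) || ((aB a s == aB a s.+1) && minus_type (aB a s))]].

Definition OmegaB (n : nat) (w : n.-tuple int) (k : nat) : nat :=
  #|[set a : n.-tuple (Zk k) | compatible w a]|.

(* Main.v *)
Require Import Defs.
From HB Require Import structures.
From mathcomp Require Import all_boot all_order all_algebra.
From mathcomp Require Import all_classical all_reals all_analysis.
From mathcomp Require Import zify ring lra.
Import Order.TTheory GRing.Theory Num.Theory.
Import numFieldNormedType.Exports.

Definition okp (p q : int) (x y : nat) : bool :=
  [&& x <= y,
      (p < q)%R ==> (x < y) || ((x == y) && plus_type x) &
      (q < p)%R ==> (x < y) || ((x == y) && minus_type x)].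

Fixpoint Gr (l : seq int) (z : nat) : nat :=
  if l is q :: l' then \sum_(x < z.+1) okp (head 0%R l') q x z * Gr l' x
  else nat_of_bool (z == 0).

Lemma card_setE (T : finType) (P : pred T) : #|[set a | P a]| = \sum_a P a.
Proof.
rewrite -sum1_card big_mkcond /=; apply: eq_bigr => a _.
by rewrite inE; case: (P a).
Qed.

Lemma sum_rcons_tuple (T : finType) n (F : n.+1.-tuple T -> nat) :
  \sum_(a : n.+1.-tuple T) F a =
  \sum_(b : n.-tuple T) \sum_(y : T) F [tuple of rcons b y].
Proof.
rewrite pair_big /=.
rewrite (reindex (fun p : n.-tuple T * T => [tuple of rcons p.1 p.2])) //=.
exists (fun a : n.+1.-tuple T =>
          ([tuple of belast (thead a) (behead a)], last (thead a) (behead a))).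
- move=> [b y] _ /=.
  have e : rcons b y = thead [tuple of rcons b y] :: behead [tuple of rcons b y].
    by rewrite -[LHS]/(val [tuple of rcons b y]) {1}(tuple_eta [tuple of rcons b y]).
  move: e; rewrite [in RHS]lastI => /rcons_inj [e1 e2].
  by congr (_, _); [apply: val_inj => /=; exact: (esym e1) | exact: (esym e2)].
- move=> a _; apply: val_inj => /=; rewrite -lastI.
  by case/tupleP: a => h s; rewrite theadE.
Qed.

Lemma sum_pick m (F : nat -> nat) (v : nat) :
  \sum_(x < m) F x * (x == v :> nat) = (v < m) * F v.
Proof.
case: (ltnP v m) => hv.
  rewrite (bigD1 (Ordinal hv)) //= eqxx muln1 big1 ?addn0 ?mul1n // => i.
  by rewrite -val_eqE /= => /negbTE ->; rewrite muln0.
rewrite big1 ?mul0n // => i _; case: eqP => [e|]; last by rewrite muln0.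
by move: (ltn_ord i); rewrite e ltnNge hv.
Qed.

Lemma piB_rcons n (w : n.-tuple int) q i : i <= n -> piB [tuple of rcons w q] i = piB w i.
Proof. by case: i => //= i hi; rewrite nth_rcons size_tuple hi. Qed.

Lemma piB_rcons_last n (w : n.-tuple int) q : piB [tuple of rcons w q] n.+1 = q.
Proof. by rewrite /= nth_rcons size_tuple ltnn eqxx. Qed.

Lemma aB_rcons n k (b : n.-tuple (Zk k)) y i : i <= n -> aB [tuple of rcons b y] i = aB b i.
Proof. by case: i => //= i hi; rewrite map_rcons nth_rcons size_map size_tuple hi. Qed.

Lemma aB_rcons_last n k (b : n.-tuple (Zk k)) y : aB [tuple of rcons b y] n.+1 = y.
Proof. by rewrite /= map_rcons nth_rcons size_map size_tuple ltnn eqxx. Qed.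

Lemma compat_rcons n k (w : n.-tuple int) q (b : n.-tuple (Zk k)) y :
  compatible [tuple of rcons w q] [tuple of rcons b y] =
  compatible w b && okp (piB w n) q (aB b n) y.
Proof.
apply/forallP/andP => [H|[/forallP H1 H2] s].
- split.
  + apply/forallP => s; have := H (widen_ord (leqnSn n) s).
    have s1 : s.+1 <= n := ltn_ord s.
    have s0 : s <= n := ltnW s1.
    rewrite (piB_rcons _ _ _ _ s0) (piB_rcons _ _ _ _ s1) (aB_rcons _ _ _ _ _ s0) (aB_rcons _ _ _ _ _ s1).
    by move=> h; exact h.
  + have := H ord_max.
    by rewrite (piB_rcons _ _ _ _ (leqnn n)) piB_rcons_last (aB_rcons _ _ _ _ _ (leqnn n)) aB_rcons_last.
- have [sn|sn] := ltnP s n.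
  + have := H1 (Ordinal sn).
    have s0 : s <= n := ltnW sn.
    by rewrite (piB_rcons _ _ _ _ s0) (piB_rcons _ _ _ _ sn) (aB_rcons _ _ _ _ _ s0) (aB_rcons _ _ _ _ _ sn).
  + have e : nat_of_ord s = n by apply/anti_leq; rewrite sn -ltnS ltn_ord.
    rewrite e (piB_rcons _ _ _ _ (leqnn n)) piB_rcons_last (aB_rcons _ _ _ _ _ (leqnn n)) aB_rcons_last.
    exact: H2.
Qed.

Lemma head_rev_last (s : seq int) : head 0%R (rev s) = last 0%R s.
Proof. by case/lastP: s => // s x; rewrite rev_rcons /= last_rcons. Qed.

Lemma piB_last n (w : n.-tuple int) : piB w n = head 0%R (rev w).
Proof.
rewrite head_rev_last; case: n w => [|n] w /=; first by rewrite (tuple0 w).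
by rewrite -nth_last size_tuple.
Qed.

Lemma tuple_rconsP n (T : Type) (w : n.+1.-tuple T) :
  exists w' : n.-tuple T, exists q, w = [tuple of rcons w' q].
Proof.
exists [tuple of belast (thead w) (behead w)], (last (thead w) (behead w)).
apply: val_inj => /=; rewrite -lastI.
by case/tupleP: w => h s; rewrite theadE.
Qed.

Lemma okp_le p q x z : okp p q x z -> x <= z.
Proof. by case/and3P. Qed.

Lemma fiber n (w : n.-tuple int) k z : z <= 2 * k ->
  #|[set a : n.-tuple (Zk k) | compatible w a && (aB a n == z)]| = Gr (rev w) z.
Proof.
elim: n w z => [|n IH] w z hz.
  rewrite card_setE (tuple0 w) /=.
  rewrite (eq_bigr (fun _ => nat_of_bool (z == 0))); last first.
    move=> a _; have -> : compatible [tuple] a by apply/forallP => -[].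
    by rewrite /= eq_sym.
  by rewrite sum_nat_const card_tuple expn0 mul1n.
have [w' [q ->]] := tuple_rconsP _ _ w.
rewrite card_setE sum_rcons_tuple rev_rcons [RHS]/= -piB_last.
under [LHS]eq_bigr => b _.
  under eq_bigr => y _ do rewrite compat_rcons aB_rcons_last -mulnb -[nat_of_bool (compatible _ _ && _)]mulnb.
  rewrite (sum_pick _ (fun y => compatible w' b * okp (piB w' n) q (aB b n) y)) ltnS hz mul1n.
  over.
under [RHS]eq_bigr => x _.
  rewrite -IH; last by apply: leq_trans hz; rewrite -ltnS.
  rewrite card_setE big_distrr /=.
  under eq_bigr => b _ do rewrite -[nat_of_bool (_ && _)]mulnb mulnA.
  over.
rewrite exchange_big /=; apply: eq_bigr => b _.
under eq_bigr => x _ do rewrite eq_sym.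
rewrite (sum_pick _ (fun x => okp (piB w' n) q x z * compatible w' b)).
case h: (okp _ _ _ _); last by rewrite !muln0.
by rewrite ltnS (okp_le _ _ _ _ h) mul1n muln1 mul1n.
Qed.

Lemma aB_bound n k (a : n.-tuple (Zk k)) : aB a n < (2 * k).+1.
Proof.
case: n a => [|n] a //=.
rewrite (nth_map ord0) ?size_tuple //; exact: ltn_ord.
Qed.

Lemma Omega_sum n (w : n.-tuple int) k :
  OmegaB w k = \sum_(z < (2 * k).+1) Gr (rev w) z.
Proof.
rewrite /OmegaB card_setE.
transitivity (\sum_(z < (2 * k).+1)
   #|[set a : n.-tuple (Zk k) | compatible w a && (aB a n == z)]|); last first.
  by apply: eq_bigr => z _; apply: fiber; rewrite -ltnS; exact: ltn_ord.
under [RHS]eq_bigr => z _ do rewrite card_setE.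
rewrite exchange_big; apply: eq_bigr => a _.
under eq_bigr => z _ do rewrite -[nat_of_bool (compatible _ _ && _)]mulnb eq_sym.
by rewrite (sum_pick _ (fun=> compatible w a)) aB_bound mul1n.
Qed.

Lemma Gr_cons q l z : head 0%R l != q ->
  Gr (q :: l) z = \sum_(x < z) Gr l x
     + (if (head 0%R l < q)%R then ~~ odd z else odd z) * Gr l z.
Proof.
move=> hpq; rewrite /= big_ord_recr /=; congr (_ + _).
  apply: eq_bigr => x _; rewrite /okp /= ltn_ord leq_eqVlt ltn_ord orbT.
  by rewrite !implybT mul1n.
rewrite /okp leqnn ltnn eqxx /=.
by case: ltgtP hpq => // _ _; rewrite /plus_type /minus_type /= ?andbT.
Qed.

Definition Oo (G : nat -> nat) (i : nat) : nat := if i is i'.+1 then G (2 * i').+1 else 0.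
Definition pre (c : nat -> nat) (k : nat) : nat := \sum_(j < k.+1) c j.
Definition shft (c : nat -> nat) (k : nat) : nat := if k is k'.+1 then c k' else 0.

Lemma sumG (G : nat -> nat) j :
  \sum_(x < (2 * j).+1) G x = pre (fun i => G (2 * i) + Oo G i) j.
Proof.
elim: j => [|j IH]; first by rewrite /pre !big_ord1 /= addn0.
rewrite /pre in IH *; rewrite [in RHS]big_ord_recr /= -IH.
have e : 2 * j.+1 = (2 * j).+2 by rewrite mulnS addnC addn2.
rewrite e big_ord_recr /= big_ord_recr /=.
by rewrite -addnA [G (2 * j).+1 + _]addnC.
Qed.

Definition Ev (l : seq int) (j : nat) : nat := Gr l (2 * j).
Definition Od (l : seq int) (j : nat) : nat := Oo (Gr l) j.
Definition Sm (l : seq int) : nat -> nat := pre (fun j => Ev l j + Od l j).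

Lemma S_sum l j : Sm l j = \sum_(x < (2 * j).+1) Gr l x.
Proof. by rewrite sumG. Qed.

Lemma odd2 j : odd (2 * j) = false.
Proof. by rewrite oddM. Qed.

Lemma step_asc q l : (head 0%R l < q)%R ->
  Ev (q :: l) =1 Sm l /\ Od (q :: l) =1 shft (Sm l).
Proof.
move=> h; have hn : head 0%R l != q by rewrite lt_eqF.
split => j.
  by rewrite /Ev Gr_cons // h odd2 /= mul1n S_sum big_ord_recr.
case: j => [|j] //.
by rewrite /Od /Oo Gr_cons // h oddS odd2 /= mul0n addn0 S_sum.
Qed.

Lemma step_desc q l : (q < head 0%R l)%R ->
  Ev (q :: l) =1 (fun j => shft (Sm l) j + Od l j) /\
  Od (q :: l) =1 (fun j => shft (Sm l) j + Od l j).
Proof.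
move=> h; have hn : head 0%R l != q by rewrite gt_eqF.
have hf : (head 0%R l < q)%R = false by rewrite lt_gtF.
split => j.
  case: j => [|j].
    by rewrite /Ev Gr_cons // hf big_ord0.
  have e : (2 * j.+1) = (2 * j).+2 by rewrite mulnS addnC addn2.
  rewrite /Ev Gr_cons // hf e !oddS negbK odd2 mul0n addn0.
  by rewrite big_ord_recr /= S_sum.
case: j => [|j] //.
by rewrite /Od /Oo Gr_cons // hf oddS odd2 /= mul1n S_sum big_ord_recr.
Qed.

Definition piS (ws : seq int) (i : nat) : int := if i is i'.+1 then nth 0%R ws i' else 0%R.
Definition sg (ws : seq int) : nat := nat_of_bool (piS ws 1 < 0)%R.
Definition pk (ws : seq int) : nat :=
  count (fun i => (piS ws i.-1 < piS ws i)%R && (piS ws i.+1 < piS ws i)%R)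
        (iota 1 (size ws).-1).

Lemma piS_rcons ws q i : i <= size ws -> piS (rcons ws q) i = piS ws i.
Proof. by case: i => //= i hi; rewrite nth_rcons hi. Qed.

Lemma piS_rcons_last ws q : piS (rcons ws q) (size ws).+1 = q.
Proof. by rewrite /= nth_rcons ltnn eqxx. Qed.

Lemma piS_last ws : piS ws (size ws) = head 0%R (rev ws).
Proof.
rewrite head_rev_last; case: ws => [|x s] //=.
by rewrite -[size s]/((size (x :: s)).-1) nth_last.
Qed.

Lemma sg_rcons ws q : sg (rcons ws q) = if ws is [::] then nat_of_bool (q < 0)%R else sg ws.
Proof.
case: ws => [|x s] //.
Qed.

Lemma pk_rcons ws q : pk (rcons ws q) =
  pk ws + (if size ws is 0 then 0
           else nat_of_bool ((piS ws (size ws).-1 < piS ws (size ws))%R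
                             && (q < piS ws (size ws))%R)).
Proof.
rewrite /pk size_rcons.
case hn: (size ws) => [|m]; first by case: ws hn.
rewrite (_ : iota 1 m.+2.-1 = iota 1 m ++ [:: m.+1]); last by have := iotaD 1 m 1; rewrite addn1 add1n.
rewrite count_cat; congr (_ + _).
  apply: eq_in_count => i; rewrite mem_iota => /andP [h1 h2].
  by rewrite !piS_rcons // hn; lia.
by rewrite /= addn0 !nth_rcons hn ltnn eqxx ltnSn (piS_rcons _ _ _ (_ : m <= size ws)) ?hn.
Qed.

Local Open Scope classical_set_scope.
Local Open Scope ring_scope.

Set Implicit Arguments.
Unset Strict Implicit.
Section An.
Variable R : realType.

Definition psum (x : R) (c : nat -> nat) (N : nat) : R :=
  \sum_(k < N) (c k)%:R * x ^+ k.
Definition HS (x : R) c (v : R) := psum x c @ \oo --> v.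

Lemma HS_ext x c d v : c =1 d -> HS x c v -> HS x d v.
Proof.
move=> e; rewrite /HS; have -> // : psum x c = psum x d.
by apply/funext => N; apply: eq_bigr => k _; rewrite e.
Qed.

Lemma HS_add x c d v u : HS x c v -> HS x d u -> HS x (fun k => c k + d k)%N (v + u).
Proof.
move=> h1 h2; rewrite /HS.
have -> : psum x (fun k => c k + d k)%N = psum x c + psum x d.
  apply/funext => N; rewrite /psum /= [RHS]/GRing.add /= -big_split /=.
  by apply: eq_bigr => k _; rewrite natrD mulrDl.
exact: cvgD.
Qed.

Lemma HS_shift x c v : HS x c v -> HS x (shft c) (x * v).
Proof.
move=> h; rewrite /HS -cvg_shiftS.
have -> : (fun n => psum x (shft c) n.+1) = (fun n => x * psum x c n).
  apply/funext => N; rewrite /psum big_ord_recl /= mul0r add0r mulr_sumr.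
  by apply: eq_bigr => k _; rewrite exprS /bump /=; ring.
exact: cvgMl_tmp.
Qed.

Lemma HS_delta x : HS x (fun k => nat_of_bool (k == 0)%N) 1.
Proof.
rewrite /HS -cvg_shiftS.
have -> : (fun n => psum x (fun k => nat_of_bool (k == 0)%N) n.+1) = (fun=> 1).
  apply/funext => N; rewrite /psum big_ord_recl /= big1 ?addr0 ?expr0 ?mulr1 //.
  by move=> i _; rewrite mul0r.
exact: cvg_cst.
Qed.

Lemma HS_zero x : HS x (fun=> 0%N) 0.
Proof.
rewrite /HS.
have -> : psum x (fun=> 0%N) = (fun=> 0).
  by apply/funext => N; rewrite /psum big1 // => i _; rewrite mul0r.
exact: cvg_cst.
Qed.

Lemma psum_pre_id x c N :
  (1 - x) * psum x (pre c) N = psum x c N - (\sum_(j < N) c j)%:R * x ^+ N.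
Proof.
elim: N => [|N IH]; first by rewrite /psum !big_ord0 mul0r mulr0 subr0.
rewrite /psum !big_ord_recr /= mulrDr -/(psum x (pre c) N) IH /pre big_ord_recr /=.
rewrite natrD exprS; rewrite -/(psum x c N); ring.
Qed.

Lemma HS_pre x c v : `|x| < 1 -> HS x c v ->
  ((fun N => (\sum_(j < N) c j)%:R * x ^+ N) @ \oo --> 0) ->
  HS x (pre c) (v / (1 - x)).
Proof.
move=> hx h h0; rewrite /HS.
have x1 : 1 - x != 0.
  have xl : x < 1 := le_lt_trans (ler_norm x) hx.
  by rewrite subr_eq0 eq_sym lt_eqF.
have -> : psum x (pre c) =
   (fun N => (psum x c N - (\sum_(j < N) c j)%:R * x ^+ N) * (1 - x)^-1).
  apply/funext => N; rewrite -psum_pre_id; field; exact: x1.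
have -> : v / (1 - x) = (v - 0) * (1 - x)^-1 by rewrite subr0.
apply: cvgMr_tmp; exact: cvgB.
Qed.

Lemma psum_ge0 y c N : 0 <= y -> 0 <= psum y c N.
Proof. by move=> hy; apply: sumr_ge0 => k _; rewrite mulr_ge0 // exprn_ge0. Qed.

Lemma psum_nd y c : 0 <= y -> nondecreasing_seq (psum y c).
Proof.
move=> hy; apply/nondecreasing_seqP => N; rewrite /psum big_ord_recr /=.
by rewrite lerDl mulr_ge0 // exprn_ge0.
Qed.

Lemma pre_cvg y c v : 0 <= y -> y < 1 -> HS y c v -> cvgn (psum y (pre c)).
Proof.
move=> y0 y1 h; apply: nondecreasing_is_cvgn; first exact: psum_nd.
exists (v / (1 - y)) => _ [N _ <-].
have hle : psum y c N <= v.
  have := nondecreasing_cvgn_le (@psum_nd y c y0) (cvgP _ h) N.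
  by rewrite (cvg_lim _ h).
have hy : 0 < 1 - y by lra.
rewrite ler_pdivlMr // mulrC psum_pre_id.
apply: le_trans hle; rewrite lerBlDr lerDl mulr_ge0 // exprn_ge0 //.
Qed.

Lemma terms0 (u : R ^nat) : cvgn u -> (fun N => u N.+1 - u N) @ \oo --> 0.
Proof.
move=> cu; have -> : 0 = limn u - limn u by rewrite subrr.
apply: cvgB => //; by rewrite cvg_shiftS.
Qed.

Definition Good (t : R) c v := HS t c v /\ exists u, HS `|t| c u.

Lemma Good_pre t c v : `|t| < 1 -> Good t c v -> Good t (pre c) (v / (1 - t)).
Proof.
move=> ht [h1 [u h2]].
have cv := @pre_cvg `|t| c u (normr_ge0 t) ht h2.
split; last by exists (limn (psum `|t| (pre c))); exact: cvgP cv.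
apply: HS_pre => //.
rewrite -cvg_shiftS /=; apply: norm_cvg0.
have T := @terms0 _ cv.
have -> : (fun n => `|(\sum_(j < n.+1) c j)%:R * t ^+ n.+1|) =
   (fun n => `|t| * (psum `|t| (pre c) n.+1 - psum `|t| (pre c) n)).
  apply/funext => N; rewrite /psum [in RHS]big_ord_recr /= addrAC subrr add0r.
  rewrite normrM normr_nat normrX exprS /pre; ring.
have := cvgMl_tmp (a := `|t|) T; rewrite mulr0; exact.
Qed.

Lemma Good_add t c d v u : Good t c v -> Good t d u -> Good t (fun k => c k + d k)%N (v + u).
Proof.
move=> [h1 [a h2]] [g1 [b g2]]; split; first exact: HS_add.
by exists (a + b); exact: HS_add.
Qed.

Lemma Good_shift t c v : Good t c v -> Good t (shft c) (t * v).
Proof.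
move=> [h1 [a h2]]; split; first exact: HS_shift.
by exists (`|t| * a); exact: HS_shift.
Qed.

Lemma Good_ext t c d v : c =1 d -> Good t c v -> Good t d v.
Proof.
move=> e [h1 [a h2]]; split; first exact: HS_ext h1.
by exists a; exact: HS_ext h2.
Qed.

Lemma Good_delta t : Good t (fun k => nat_of_bool (k == 0)%N) 1.
Proof. by split; [exact: HS_delta | exists 1; exact: HS_delta]. Qed.

Lemma Good_zero t : Good t (fun=> 0%N) 0.
Proof. by split; [exact: HS_zero | exists 0; exact: HS_zero]. Qed.


Fixpoint Val (t : R) (l : seq int) : R * R :=
  if l is q :: l' then
    let: (e, o) := Val t l' in
    let s := (e + o) / (1 - t) in
    if (head 0%R l' < q)%R then (s, t * s) else (t * s + o, t * s + o)
  else (1, 0).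

Fixpoint Dl (l : seq int) : bool :=
  if l is q :: l' then (head 0%R l' != q) && Dl l' else true.

Lemma Good_Val t l : `|t| < 1 -> Dl l ->
  Good t (Ev l) (Val t l).1 /\ Good t (Od l) (Val t l).2.
Proof.
move=> ht; elim: l => [|q l IH] /=.
  move=> _; split.
    apply: Good_ext (Good_delta t) => j; rewrite /Ev /=.
    by case: j.
  apply: Good_ext (Good_zero t) => j; rewrite /Od /Oo.
  by case: j.
move=> /andP [hq /IH [h1 h2]].
case: (Val t l) h1 h2 => e o /= h1 h2.
have hS : Good t (Sm l) ((e + o) / (1 - t)).
  by apply: Good_pre => //; apply: Good_add.
case: ifP => hlt /=.
  have [a b] := step_asc _ _ hlt.
  split; first exact: Good_ext hS.
  exact: Good_ext (Good_shift hS).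
have hlt' : (q < head 0%R l)%R.
  by move: hq hlt; case: ltgtP.
have [a b] := step_desc _ _ hlt'.
have hh := Good_add (Good_shift hS) h2.
by split; [exact: Good_ext hh | exact: Good_ext hh].
Qed.

Definition Qv (t : R) (ws : seq int) : R :=
  ((1 + t) / (1 - t)) ^+ size ws * (2 * t / (1 + t)) ^+ sg ws
    * (4 * t / (1 + t) ^+ 2) ^+ pk ws.

Definition Inv (t : R) (ws : seq int) (v : R * R) : Prop :=
  v.1 + v.2 = Qv t ws /\ v.2 = (if size ws is 0 then 0 else
         if (piS ws (size ws).-1 < piS ws (size ws))%R then t / (1 + t) * (v.1 + v.2)
         else (v.1 + v.2) / 2).

Definition AD (ws : seq int) := forall i, (i < size ws)%N -> piS ws i != piS ws i.+1.

Lemma AD_rcons s q : AD (rcons s q) -> AD s /\ piS s (size s) != q.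
Proof.
move=> h; split.
  move=> i hi; have := h i; rewrite size_rcons ltnS (ltnW hi) => /(_ isT).
  by rewrite !piS_rcons // ltnW.
have := h (size s); rewrite size_rcons ltnSn => /(_ isT).
by rewrite piS_rcons // piS_rcons_last.
Qed.

Lemma AD_Dl ws : AD ws -> Dl (rev ws).
Proof.
elim/last_ind: ws => [|s q IH] // /AD_rcons [h1 h2].
by rewrite rev_rcons /= -piS_last h2 IH.
Qed.

Lemma Val_inv t ws : `|t| < 1 -> AD ws -> Inv t ws (Val t (rev ws)).
Proof.
move=> ht.
have tp : 1 + t != 0.
  have : - t <= `|t| by rewrite -normrN ler_norm.
  move=> h; apply/negP => /eqP e; move: ht; lra.
have tm : 1 - t != 0.
  have := ler_norm t => h; apply/negP => /eqP e; move: ht; lra.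
have two : (2 : R) != 0 by rewrite pnatr_eq0.
elim/last_ind: ws => [|s q IH].
  by rewrite /Inv /Qv /= /sg /pk /= !expr0 !mulr1 addr0.
move=> /AD_rcons [/IH {}IH hpq].
rewrite rev_rcons /= -piS_last.
move: IH; case: (Val t (rev s)) => e o [He Ho].
rewrite /Inv /Qv size_rcons sg_rcons pk_rcons /=.
rewrite (piS_rcons _ _ _ (leqnn _)) nth_rcons ltnn eqxx.
move: He Ho hpq; rewrite /Qv.
case: (eqVneq (size s) 0) => [/size0nil -> | hn].
  rewrite /sg /pk /= !expr0 !mulr1 => He ho hpq; rewrite He ho /= in hpq *.
  case: ltgtP hpq => [hq _|hq _|eq0 h]; last by [].
    rewrite /= !expr1 expr0 mulr1.
    split; field; rewrite ?tp ?tm ?two //.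
  rewrite /= !expr1.
  split; field; rewrite ?tp ?tm ?two //.
have sgE : (match s with [::] => nat_of_bool (q < 0)%R | _ :: _ => sg s end) = sg s.
  by case: s hn.
rewrite sgE.
move: (sg s) (pk s) => g k.
case: (size s) hn => [|m] // _ /=.
move=> He Ho hpq; rewrite He in Ho.
set X := _ * _ ^+ k in He Ho *.
case: ltgtP hpq => [hq _|hq _|eq0 h]; last by [].
- rewrite andbF addn0 /= He.
  have -> : ((1 + t) / (1 - t)) ^+ m.+2 * (2 * t / (1 + t)) ^+ g * (4 * t / (1 + t) ^+ 2) ^+ k
     = (1 + t) / (1 - t) * X by rewrite /X exprS -!mulrA.
  split; field; rewrite ?tp ?tm ?two //.
- rewrite andbT /= He.
  case: (boolP (piS s m < nth 0%R s m)) => h0 /= in Ho *.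
    have -> : ((1 + t) / (1 - t)) ^+ m.+2 * (2 * t / (1 + t)) ^+ g * (4 * t / (1 + t) ^+ 2) ^+ (k + 1)
       = (1 + t) / (1 - t) * (4 * t / (1 + t) ^+ 2) * X.
      by rewrite /X addn1 !exprS; ring.
    rewrite Ho; split; field; rewrite ?tp ?tm ?two //.
  have -> : ((1 + t) / (1 - t)) ^+ m.+2 * (2 * t / (1 + t)) ^+ g * (4 * t / (1 + t) ^+ 2) ^+ (k + 0)
     = (1 + t) / (1 - t) * X by rewrite /X addn0 exprS -!mulrA.
  rewrite Ho; split; field; rewrite ?tp ?tm ?two //.
Qed.

Lemma AD_of (s : seq int) : perm_eq (map absz s) (iota 1 (size s)) -> AD s.
Proof.
move=> hp i hi.
have hu : uniq (map absz s) by rewrite (perm_uniq hp) iota_uniq.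
have h0 : forall j, (j < size s)%N -> absz (nth 0%R s j) != 0%N.
  move=> j hj; apply/negP => /eqP e.
  have : 0%N \in map absz s by rewrite -e map_f // mem_nth.
  by rewrite (perm_mem hp) mem_iota.
case: i hi => [|i] hi /=.
  by rewrite eq_sym; apply/negP => /eqP e; move: (h0 0%N hi); rewrite e.
apply/negP => /eqP e.
have := @nth_uniq _ 0%N (map absz s) i i.+1.
rewrite size_map (ltnW hi) hi => /(_ isT isT hu).
by rewrite !(nth_map 0%R) ?(ltnW hi) // e eqxx => /esym /eqP; lia.
Qed.

End An.

Unset Implicit Arguments.
Set Strict Implicit.

Theorem theorem4p12 (R : realType) (n : nat) (w : n.-tuple int)
  (hw : is_signed_perm w) (t : R) (ht : `|t| < 1) :
  ((fun N : nat => \sum_(k < N) (OmegaB w k)%:R * t ^+ k) @ \oo -->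
     (1 + t) ^+ n / (1 - t) ^+ n.+1 * (2 * t / (1 + t)) ^+ varsigmaB w
       * (4 * t / (1 + t) ^+ 2) ^+ peB w)
  /\
  (1 + t) ^+ n / (1 - t) ^+ n.+1 * (2 * t / (1 + t)) ^+ varsigmaB w
       * (4 * t / (1 + t) ^+ 2) ^+ peB w
  = (2^-1) ^+ varsigmaB w * ((1 + t) ^+ (n + varsigmaB w) / (1 - t) ^+ n.+1)
       * (4 * t / (1 + t) ^+ 2) ^+ (peB w + varsigmaB w).
Proof.
have tp : 1 + t != 0.
  have : - t <= `|t| by rewrite -normrN ler_norm.
  move=> h; apply/negP => /eqP e; move: ht; lra.
have tm : 1 - t != 0.
  have := ler_norm t => h; apply/negP => /eqP e; move: ht; lra.
have two : (2 : R) != 0 by rewrite pnatr_eq0.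
split.
  have hAD : AD w by apply: AD_of; rewrite size_tuple; exact: hw.
  have [hE hO] := Good_Val ht (AD_Dl hAD).
  have [hS _] := Good_pre ht (Good_add hE hO).
  have [hI _] := Val_inv ht hAD.
  have hOm : forall k, Sm (rev w) k = OmegaB w k by move=> k; rewrite Omega_sum S_sum.
  have := HS_ext hOm hS; rewrite /HS /psum hI /Qv size_tuple.
  have -> : sg w = varsigmaB w by [].
  have -> : pk w = peB w by rewrite /pk size_tuple.
  suff -> : ((1 + t) / (1 - t)) ^+ n * (2 * t / (1 + t)) ^+ varsigmaB w *
     (4 * t / (1 + t) ^+ 2) ^+ peB w / (1 - t) =
     (1 + t) ^+ n / (1 - t) ^+ n.+1 * (2 * t / (1 + t)) ^+ varsigmaB w *
     (4 * t / (1 + t) ^+ 2) ^+ peB w by [].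
  rewrite expr_div_n [(1 - t) ^+ n.+1]exprS; field.
  by rewrite ?tm ?expf_neq0.
rewrite /varsigmaB; case: (piB w 1 < 0)%R => /=.
  rewrite !expr1 !addn1 !exprS; field.
  by rewrite ?tp ?tm ?two ?expf_neq0.
rewrite !addn0 !expr0 mul1r mulr1.
by [].
Qed.
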